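(* Let $j\ge 1$ and consider the $j$-th flow of the type II hierarchy (defined in the context), i.e. the system $q_{t_j}=F_j[q,r]$, $r_{t_j}=G_j[q,r]$. Then this system admits the constraint $r=-\bar q$: for every smooth $q:\mathbb{R}^2\to\mathbb{C}$ one has the identity $$G_j[q,-\bar q]=-\overline{F_j[q,-\bar q]},$$ so that the constraint $r=-\bar q$ is preserved by the flow and the system reduces to a single evolution equation $q_{t_j}=F_j[q,-\bar q]$ for $q$ (for $j=2$ this is the Gerdjikov–Ivanov equation $q_t=\frac{i}{2}q_{xx}+\frac12 q^2\bar q_x+\frac{i}{4}|q|^4q$).
   Context: Let $a=\mathrm{diag}(i,-i)$. For smooth complex-valued functions $q(x,t)$, $r(x,t)$ set $u=\begin{pmatrix}0&q\\ r&0\end{pmatrix}$ and $P_0=\frac{i}{2}\begin{pmatrix}qr&0\\0&-qr\end{pmatrix}$. Consider formal series $Q=\sum_{k\le 2}Q_k\lambda^k$ in a formal parameter $\lambda$, whose coefficients $Q_k$ are traceless $2\times2$ matrices of smooth functions of $(x,t)$, with $Q_k$ diagonal for $k$ even and off-diagonal for $k$ odd. Let $Q$ be the unique such series with $Q_2=a$, $Q_1=u$, satisfying $[\partial_x+a\lambda^2+u\lambda+P_0,\;Q]=0$ (i.e. $\partial_x Q+[a\lambda^2+u\lambda+P_0,Q]=0$ coefficientwise) and $Q^2=-\lambda^4 I$; its coefficients are differential polynomials in $q,r$. The $j$-th flow of the ''type II hierarchy'' is $$u_{t_j}=\partial_x Q_{3-2j}+[P_0,Q_{3-2j}]+[u,Q_{2-2j}],$$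 whose right-hand side is off-diagonal, of the form $\begin{pmatrix}0&F_j[q,r]\\ G_j[q,r]&0\end{pmatrix}$ with $F_j,G_j$ differential polynomials in $q,r$; thus the flow is the system $q_{t_j}=F_j[q,r]$, $r_{t_j}=G_j[q,r]$. *)

(* Defs.v *)
From Stdlib Require Import Reals ZArith.
Open Scope R_scope.

Record Cplx := mkC { Re : R ; Im : R }.
Definition C0 : Cplx := mkC 0 0.
Definition C1 : Cplx := mkC 1 0.
Definition Ci : Cplx := mkC 0 1.
Definition Chalf : Cplx := mkC (1/2) 0.
Definition Cadd (z w : Cplx) : Cplx := mkC (Re z + Re w) (Im z + Im w).
Definition Copp (z : Cplx) : Cplx := mkC (- Re z) (- Im z).
Definition Cmul (z w : Cplx) : Cplx :=
  mkC (Re z * Re w - Im z * Im w) (Re z * Im w + Im z * Re w).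
Definition Cconj (z : Cplx) : Cplx := mkC (Re z) (- Im z).

Record M2 := mkM2 { e11 : Cplx ; e12 : Cplx ; e21 : Cplx ; e22 : Cplx }.
Definition M0 : M2 := mkM2 C0 C0 C0 C0.
Definition MI : M2 := mkM2 C1 C0 C0 C1.
Definition Madd (A B : M2) : M2 :=
  mkM2 (Cadd (e11 A) (e11 B)) (Cadd (e12 A) (e12 B))
       (Cadd (e21 A) (e21 B)) (Cadd (e22 A) (e22 B)).
Definition Mopp (A : M2) : M2 :=
  mkM2 (Copp (e11 A)) (Copp (e12 A)) (Copp (e21 A)) (Copp (e22 A)).
Definition Mmul (A B : M2) : M2 :=
  mkM2 (Cadd (Cmul (e11 A) (e11 B)) (Cmul (e12 A) (e21 B)))
       (Cadd (Cmul (e11 A) (e12 B)) (Cmul (e12 A) (e22 B)))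
       (Cadd (Cmul (e21 A) (e11 B)) (Cmul (e22 A) (e21 B)))
       (Cadd (Cmul (e21 A) (e12 B)) (Cmul (e22 A) (e22 B))).
Definition Mcomm (A B : M2) : M2 := Madd (Mmul A B) (Mopp (Mmul B A)).

Definition traceless (A : M2) : Prop := Cadd (e11 A) (e22 A) = C0.
Definition diagonal (A : M2) : Prop := e12 A = C0 /\ e21 A = C0.
Definition offdiagonal (A : M2) : Prop := e11 A = C0 /\ e22 A = C0.

Definition aM : M2 := mkM2 Ci C0 C0 (Copp Ci).
Definition uM (q r : Cplx) : M2 := mkM2 C0 q r C0.
Definition P0M (q r : Cplx) : M2 :=
  let c := Cmul (Cmul Ci Chalf) (Cmul q r) in mkM2 c C0 C0 (Copp c).

(* A real function of (x,t) all of whose iterated partial derivatives exist: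
   D m n plays the role of d_x^m d_t^n f. *)
Definition SmoothR2 (f : R -> R -> R) : Prop :=
  exists D : nat -> nat -> R -> R -> R,
    D 0%nat 0%nat = f /\
    forall m n x t,
      derivable_pt_lim (fun y => D m n y t) x (D (S m) n x t) /\
      derivable_pt_lim (fun s => D m n x s) t (D m (S n) x t).

Definition SmoothC (f : R -> R -> Cplx) : Prop :=
  SmoothR2 (fun x t => Re (f x t)) /\ SmoothR2 (fun x t => Im (f x t)).

Definition SmoothM (A : R -> R -> M2) : Prop :=
  SmoothC (fun x t => e11 (A x t)) /\ SmoothC (fun x t => e12 (A x t)) /\
  SmoothC (fun x t => e21 (A x t)) /\ SmoothC (fun x t => e22 (A x t)).

Definition HasDxC (f g : R -> R -> Cplx) : Prop :=
  forall x t,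
    derivable_pt_lim (fun y => Re (f y t)) x (Re (g x t)) /\
    derivable_pt_lim (fun y => Im (f y t)) x (Im (g x t)).

Definition HasDxM (A B : R -> R -> M2) : Prop :=
  HasDxC (fun x t => e11 (A x t)) (fun x t => e11 (B x t)) /\
  HasDxC (fun x t => e12 (A x t)) (fun x t => e12 (B x t)) /\
  HasDxC (fun x t => e21 (A x t)) (fun x t => e21 (B x t)) /\
  HasDxC (fun x t => e22 (A x t)) (fun x t => e22 (B x t)).

Fixpoint msum (f : nat -> M2) (N : nat) : M2 :=
  match N with
  | O => f O
  | S n => Madd (msum f n) (f (S n))
  end.

(* coefficient of lambda^m in Q^2 (Q_k = 0 for k > 2, so the sum is finite:
   Q_{m-2} Q_2 + Q_{m-1} Q_1 + ... + Q_2 Q_{m-2}) *)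
Definition sq_coeff (Q : Z -> M2) (m : Z) : M2 :=
  if (m <=? 4)%Z then
    msum (fun n => Mmul (Q (m - 2 + Z.of_nat n)%Z) (Q (2 - Z.of_nat n)%Z))
         (Z.to_nat (4 - m))
  else M0.

(* Q : coefficients (as matrix functions of (x,t)), dQ : their x-derivatives.
   IsTypeIIQ q r Q dQ says Q is a series with the properties characterising
   the (unique) series of the type II hierarchy. *)
Record IsTypeIIQ (q r : R -> R -> Cplx) (Q dQ : Z -> R -> R -> M2) : Prop := {
  Q_top    : forall k x t, (2 < k)%Z -> Q k x t = M0;
  Q_2      : forall x t, Q 2%Z x t = aM;
  Q_1      : forall x t, Q 1%Z x t = uM (q x t) (r x t);
  Q_smooth : forall k, SmoothM (Q k);
  Q_dx     : forall k, HasDxM (Q k) (dQ k);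
  Q_trace  : forall k x t, traceless (Q k x t);
  Q_parity : forall k x t,
      (Z.even k = true -> diagonal (Q k x t)) /\
      (Z.even k = false -> offdiagonal (Q k x t));
  (* [d_x + a lambda^2 + u lambda + P0, Q] = 0, coefficient of lambda^m *)
  Q_comm   : forall m x t,
      Madd (Madd (dQ m x t) (Mcomm aM (Q (m - 2)%Z x t)))
           (Madd (Mcomm (uM (q x t) (r x t)) (Q (m - 1)%Z x t))
                 (Mcomm (P0M (q x t) (r x t)) (Q m x t))) = M0;
  (* Q^2 = - lambda^4 I, coefficient of lambda^m *)
  Q_square : forall m x t,
      sq_coeff (fun k => Q k x t) m = if (m =? 4)%Z then Mopp MI else M0
}.

Definition flowRHS (j : nat) (q r : R -> R -> Cplx) (Q dQ : Z -> R -> R -> M2)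
  (x t : R) : M2 :=
  let k := (3 - 2 * Z.of_nat j)%Z in
  Madd (Madd (dQ k x t) (Mcomm (P0M (q x t) (r x t)) (Q k x t)))
       (Mcomm (uM (q x t) (r x t)) (Q (2 - 2 * Z.of_nat j)%Z x t)).

(* Main.v *)
Require Import Defs.
From Stdlib Require Import Reals ZArith.
From Stdlib Require Import Lia Lra FunctionalExtensionality.
Open Scope R_scope.

Definition antiH (A : M2) : Prop :=
  Re (e11 A) = 0 /\ Re (e22 A) = 0 /\ e21 A = Copp (Cconj (e12 A)).

Definition ImTr (A : M2) : R := Im (Cadd (e11 A) (e22 A)).

Ltac dM A := let a1 := fresh "a" in let a2 := fresh "a" in let b1 := fresh "b" in
  let b2 := fresh "b" in let c1 := fresh "c" in let c2 := fresh "c" in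
  let d1 := fresh "d" in let d2 := fresh "d" in
  destruct A as [[a1 a2] [b1 b2] [c1 c2] [d1 d2]].

Ltac unf := unfold antiH, ImTr, Madd, Mcomm, Mmul, Mopp, Cadd, Cmul, Copp, Cconj,
  aM, uM, P0M, M0, MI, C0, C1, Ci, Chalf, offdiagonal, diagonal, traceless in *; simpl in *.

Ltac openH H := let H1 := fresh "H" in let H2 := fresh "H" in let H3 := fresh "H" in
  let H4 := fresh "H" in let H5 := fresh "H" in
  unf; destruct H as [H1 [H2 H3]];
  injection H3 as H4 H5; subst.

Ltac fin := unf; repeat split; try f_equal; ring.

Lemma antiH_add A B : antiH A -> antiH B -> antiH (Madd A B).
Proof. dM A; dM B; intros HA HB; openH HA; openH HB; fin. Qed.

Lemma antiH_comm A B : antiH A -> antiH B -> antiH (Mcomm A B).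
Proof. dM A; dM B; intros HA HB; openH HA; openH HB; fin. Qed.

Lemma antiH_a : antiH aM. Proof. fin. Qed.
Lemma antiH_0 : antiH M0. Proof. fin. Qed.
Lemma antiH_u q : antiH (uM q (Copp (Cconj q))). Proof. destruct q; fin. Qed.
Lemma antiH_P0 q : antiH (P0M q (Copp (Cconj q))). Proof. destruct q; fin. Qed.

Lemma odd_lemma A D E : offdiagonal A -> antiH D -> antiH E ->
  Madd (Madd D (Mcomm aM A)) E = M0 -> antiH A.
Proof.
  dM A; dM D; dM E; intros [HA1 HA2] HD HE H; openH HD; openH HE.
  simpl in HA1, HA2; injection HA1 as ? ?; injection HA2 as ? ?; subst.
  unfold Madd, Mcomm, Mmul, aM, Mopp, Cadd, Cmul, Copp, Ci, C0, M0 in H; simpl in H.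
  injection H as E1 E2 E3 E4 E5 E6 E7 E8.
  unfold antiH; simpl; repeat split; try f_equal; lra.
Qed.


Fixpoint rsum (f : nat -> R) (N : nat) : R :=
  match N with O => f O | S n => rsum f n + f (S n) end.

Lemma ImTr_msum f N : ImTr (msum f N) = rsum (fun n => ImTr (f n)) N.
Proof.
  induction N; simpl; auto. rewrite <- IHN. unfold ImTr; simpl; ring.
Qed.

Lemma rsum_end h N : (1 <= N)%nat -> (forall n, (0 < n < N)%nat -> h n = 0) ->
  rsum h N = h O + h N.
Proof.
  induction N; intros HN Hm; [lia|]. destruct N; [simpl; ring|].
  simpl rsum. simpl rsum in IHN. rewrite IHN by (try lia; intros; apply Hm; lia).
  rewrite (Hm (S N)) by lia. ring.
Qed.

Lemma ImTr_antiH A B : antiH A -> antiH B -> ImTr (Mmul A B) = 0.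
Proof. dM A; dM B; intros HA HB; openH HA; openH HB; unfold ImTr; simpl; ring. Qed.

Lemma deriv_antiH (F G : R -> R -> M2) : HasDxM F G ->
  (forall x t, antiH (F x t)) -> forall x t, antiH (G x t).
Proof.
  intros [H11 [H12 [H21 H22]]] HF x t.
  destruct (H11 x t) as [D11 _]. destruct (H22 x t) as [D22 _].
  destruct (H12 x t) as [D12r D12i]. destruct (H21 x t) as [D21r D21i].
  assert (E11 : (fun y => Re (e11 (F y t))) = fct_cte 0).
  { apply functional_extensionality; intro y; destruct (HF y t) as [? _]; auto. }
  assert (E22 : (fun y => Re (e22 (F y t))) = fct_cte 0).
  { apply functional_extensionality; intro y; destruct (HF y t) as [_ [? _]]; auto. }
  assert (Er : (fun y => Re (e21 (F y t))) = opp_fct (fun y => Re (e12 (F y t)))).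
  { apply functional_extensionality; intro y; destruct (HF y t) as [_ [_ H]].
    unfold opp_fct; rewrite H; reflexivity. }
  assert (Ei : (fun y => Im (e21 (F y t))) = (fun y => Im (e12 (F y t)))).
  { apply functional_extensionality; intro y; destruct (HF y t) as [_ [_ H]].
    rewrite H; simpl; ring. }
  rewrite E11 in D11. rewrite E22 in D22. rewrite Er in D21r. rewrite Ei in D21i.
  pose proof (derivable_pt_lim_const 0 x) as C0'.
  pose proof (derivable_pt_lim_opp _ _ _ D12r) as O.
  unfold antiH; split; [|split].
  - eapply uniqueness_limite; eauto.
  - eapply uniqueness_limite; eauto.
  - destruct (e21 (G x t)) as [g1 g2] eqn:Eg; destruct (e12 (G x t)) as [h1 h2] eqn:Eh.
    simpl in *. rewrite (uniqueness_limite _ _ _ _ D21r O).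
    rewrite (uniqueness_limite _ _ _ _ D21i D12i). unfold Copp, Cconj; simpl; f_equal; ring.
Qed.

Theorem mainTheorem1 (j : nat) (q : R -> R -> Cplx) (Q dQ : Z -> R -> R -> M2) :
  (1 <= j)%nat ->
  SmoothC q ->
  IsTypeIIQ q (fun x t => Copp (Cconj (q x t))) Q dQ ->
  forall x t : R,
    e21 (flowRHS j q (fun x t => Copp (Cconj (q x t))) Q dQ x t)
    = Copp (Cconj (e12 (flowRHS j q (fun x t => Copp (Cconj (q x t))) Q dQ x t))).
Proof.
  intros Hj Hq HQ.
  assert (Hall : forall n : nat, forall k, (2 - Z.of_nat n <= k)%Z ->
            forall x t, antiH (Q k x t)).
  { induction n as [|n IHn].
    - intros k Hk x t. destruct (Z.eq_dec k 2) as [->|Hne].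
      + rewrite (Q_2 _ _ _ _ HQ). apply antiH_a.
      + rewrite (Q_top _ _ _ _ HQ) by lia. apply antiH_0.
    - intros k Hk x t. destruct (Z_le_gt_dec (2 - Z.of_nat n) k) as [Hle|Hgt].
      { apply IHn; lia. }
      assert (Hk' : k = (1 - Z.of_nat n)%Z) by lia.
      assert (IH' : forall k', (k < k')%Z -> forall x t, antiH (Q k' x t)).
      { intros k' Hk2; apply IHn; lia. }
      destruct (Z.even k) eqn:Ev.
      +
        destruct (Q_parity _ _ _ _ HQ k x t) as [Hd _]; specialize (Hd Ev).
        pose proof (Q_trace _ _ _ _ HQ k x t) as Htr.
        pose proof (Q_square _ _ _ _ HQ (k + 2)%Z x t) as Hs.
        assert (Hkle : (k <= 0)%Z).
        { destruct (Z.eq_dec k 1); [rewrite e in Ev; discriminate|lia]. }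
        unfold sq_coeff in Hs.
        replace (k + 2 <=? 4)%Z with true in Hs by (symmetry; apply Z.leb_le; lia).
        replace (k + 2 =? 4)%Z with false in Hs by (symmetry; apply Z.eqb_neq; lia).
        apply (f_equal ImTr) in Hs. rewrite ImTr_msum in Hs.
        set (N := Z.to_nat (4 - (k + 2))) in Hs.
        assert (HN : Z.of_nat N = (2 - k)%Z) by (unfold N; rewrite Z2Nat.id; lia).
        rewrite rsum_end in Hs.
        2: lia.
        2: { intros m Hm. apply ImTr_antiH; apply IH'; lia. }
        cbv beta in Hs.
        replace (k + 2 - 2 + Z.of_nat 0)%Z with k in Hs by (simpl; lia).
        replace (2 - Z.of_nat 0)%Z with 2%Z in Hs by (simpl; lia).
        replace (k + 2 - 2 + Z.of_nat N)%Z with 2%Z in Hs by lia.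
        replace (2 - Z.of_nat N)%Z with k in Hs by lia.
        rewrite (Q_2 _ _ _ _ HQ) in Hs.
        destruct (Q k x t) as [[a1 a2] [b1 b2] [c1 c2] [d1 d2]].
        destruct Hd as [Hd1 Hd2]; simpl in Hd1, Hd2.
        injection Hd1 as ? ?; injection Hd2 as ? ?; subst.
        unfold traceless in Htr; simpl in Htr; injection Htr as T1 T2.
        unfold ImTr, M0 in Hs; simpl in Hs.
        unfold antiH, Copp, Cconj; simpl; split; [lra|split; [lra|f_equal; ring]].
      +
        destruct (Q_parity _ _ _ _ HQ k x t) as [_ Ho]; specialize (Ho Ev).
        pose proof (Q_comm _ _ _ _ HQ (k + 2)%Z x t) as Hc.
        replace (k + 2 - 2)%Z with k in Hc by lia.
        replace (k + 2 - 1)%Z with (k + 1)%Z in Hc by lia.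
        eapply (odd_lemma (Q k x t) (dQ (k + 2)%Z x t) _ Ho); cycle 2; [exact Hc| |].
        * apply (deriv_antiH (Q (k + 2)%Z) (dQ (k + 2)%Z) (Q_dx _ _ _ _ HQ _)).
          intros; apply IH'; lia.
        * apply antiH_add; apply antiH_comm; try apply antiH_u; try apply antiH_P0;
            apply IH'; lia.
}
  assert (HA : forall k x t, antiH (Q k x t)).
  { intros k. apply (Hall (Z.to_nat (2 - k))). lia. }
  intros x t.
  assert (H : antiH (flowRHS j q (fun x t => Copp (Cconj (q x t))) Q dQ x t)).
  { unfold flowRHS. apply antiH_add; [apply antiH_add|].
    - apply (deriv_antiH _ _ (Q_dx _ _ _ _ HQ _)). apply HA.
    - apply antiH_comm; [apply antiH_P0|apply HA].
    - apply antiH_comm; [apply antiH_u|apply HA]. }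
  destruct H as [_ [_ H]]. exact H.
Qed.
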